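(* For any two pre-subgroups $f,f'$ of $V$ there exist pre-subgroups $g,g'$ with $H^f\cap H^{f'}=H^g$ and $H_f\cap H_{f'}=H_{g'}$. Consequently the set of pre-subgroups ordered by $\prec$ is a lattice, with $g=\inf(f,f')$ and $g'=\sup(f,f')$.
   Context: Let $\mathcal H$ be a finite-dimensional Hilbert space and $V$ a multiplicative unitary on $\mathcal H$ ($V_{12}V_{13}V_{23}=V_{23}V_{12}$) of multiplicity 1 (one-dimensional space of fixed vectors $\xi$, i.e. $V(\xi\otimes\eta)=\xi\otimes\eta$ for all $\eta$). Fix a unit fixed vector $e$. A pre-subgroup is $f\in\mathcal H$ with $\|f\|=1$, $\langle f,e\rangle>0$, $V(f\otimes f)=f\otimes f$; $H^f=\{\eta:V(f\otimes\eta)=f\otimes\eta\}$, $H_f=\{\eta:V(\eta\otimes f)=\eta\otimes f\}$. The partial order $g\prec f$ on pre-subgroups means $V(f\otimes g)=f\otimes g$, equivalently $H^g\subset H^f$, equivalently $H_f\subset H_g$. *)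

(* Defs.v *)
From HB Require Import structures.
From mathcomp Require Import all_boot all_order all_algebra.
From mathcomp Require Import sesquilinear spectral.
Set Implicit Arguments. Unset Strict Implicit. Unset Printing Implicit Defensive.
Import Order.TTheory GRing.Theory Num.Theory.
Local Open Scope ring_scope.

(* The finite-dimensional Hilbert space H is C^n (column vectors 'cV[C]_n),
   C an arbitrary numeric algebraically closed field (e.g. the complex
   numbers).  H (x) H is 'cV[C]_(n*n), with the basis vector e_i (x) e_j at
   index [mxvec_index i j]; H (x) H (x) H is 'cV[C]_(n*n*n), with
   e_a (x) e_b (x) e_c at index [mxvec_index (mxvec_index a b) c]. *)

(* inner product <u, v> (linear in u, antilinear in v) *)
Definition ip (C : numClosedFieldType) n (u v : 'cV[C]_n) : C :=
  dotmx (u ^T) (v ^T).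

Definition tens (C : numClosedFieldType) n (x y : 'cV[C]_n) : 'cV[C]_(n * n) :=
  (mxvec (x *m y ^T)) ^T.

Definition unvec m n (k : 'I_(m * n)) : 'I_m * 'I_n :=
  enum_val (cast_ord (esym (mxvec_cast m n)) k).

Definition unvec3 n (K : 'I_(n * n * n)) : 'I_n * 'I_n * 'I_n :=
  let: (ab, c) := unvec K in let: (a, b) := unvec ab in (a, b, c).

Definition leg12 (C : numClosedFieldType) n (V : 'M[C]_(n * n)) : 'M[C]_(n * n * n) :=
  \matrix_(K, L) let: (a, b, c) := unvec3 K in let: (a', b', c') := unvec3 L in
     V (mxvec_index a b) (mxvec_index a' b') * (c == c')%:R.
Definition leg13 (C : numClosedFieldType) n (V : 'M[C]_(n * n)) : 'M[C]_(n * n * n) :=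
  \matrix_(K, L) let: (a, b, c) := unvec3 K in let: (a', b', c') := unvec3 L in
     V (mxvec_index a c) (mxvec_index a' c') * (b == b')%:R.
Definition leg23 (C : numClosedFieldType) n (V : 'M[C]_(n * n)) : 'M[C]_(n * n * n) :=
  \matrix_(K, L) let: (a, b, c) := unvec3 K in let: (a', b', c') := unvec3 L in
     V (mxvec_index b c) (mxvec_index b' c') * (a == a')%:R.

Definition multiplicative_unitary (C : numClosedFieldType) n (V : 'M[C]_(n * n)) :=
  V \is unitarymx /\ leg12 V *m leg13 V *m leg23 V = leg23 V *m leg12 V.

Definition fixed_vector (C : numClosedFieldType) n (V : 'M[C]_(n * n)) (xi : 'cV[C]_n) :=
  forall eta : 'cV[C]_n, V *m tens xi eta = tens xi eta.

Definition multiplicity_one (C : numClosedFieldType) n (V : 'M[C]_(n * n)) :=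
  exists2 e : 'cV[C]_n, e != 0 &
    forall xi, fixed_vector V xi <-> exists c : C, xi = c *: e.

Definition pre_subgroup (C : numClosedFieldType) n (V : 'M[C]_(n * n)) (e f : 'cV[C]_n) :=
  [/\ ip f f = 1, 0 < ip f e & V *m tens f f = tens f f].

Definition Hup (C : numClosedFieldType) n (V : 'M[C]_(n * n)) (f eta : 'cV[C]_n) :=
  V *m tens f eta = tens f eta.
Definition Hdown (C : numClosedFieldType) n (V : 'M[C]_(n * n)) (f eta : 'cV[C]_n) :=
  V *m tens eta f = tens eta f.

Definition prec (C : numClosedFieldType) n (V : 'M[C]_(n * n)) (g f : 'cV[C]_n) :=
  V *m tens f g = tens f g.

(* Main.v *)
Require Import Defs.
From HB Require Import structures.
From mathcomp Require Import all_boot all_order all_algebra.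
From mathcomp Require Import sesquilinear spectral.
From mathcomp.algebra_tactics Require Import ring.
From Stdlib Require Import Classical.
Import Order.TTheory GRing.Theory Num.Theory.
Local Open Scope ring_scope.
Local Open Scope sesquilinear_scope.
Set Implicit Arguments. Unset Strict Implicit. Unset Printing Implicit Defensive.

Section Sums.
Variable (C : numClosedFieldType).

Lemma unvecE p q (i : 'I_p) (j : 'I_q) : unvec (mxvec_index i j) = (i, j).
Proof. by rewrite /unvec /mxvec_index cast_ordK enum_rankK. Qed.

Lemma sum_mxvec p q (G : 'I_(p * q) -> C) :
  \sum_k G k = \sum_i \sum_j G (mxvec_index i j).
Proof.
rewrite pair_bigA /=.
rewrite (reindex (fun x : 'I_p * 'I_q => mxvec_index x.1 x.2)) //=.
exists (fun k => unvec k) => [[x y] _|k _] /=; first by rewrite unvecE.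
by case/mxvec_indexP: k => i j; rewrite unvecE.
Qed.



Lemma unvec3E n (a b c : 'I_n) :
  unvec3 (mxvec_index (mxvec_index a b) c) = (a, b, c).
Proof. by rewrite /unvec3 !unvecE. Qed.

Lemma mxvec_index_inj p q (i i' : 'I_p) (j j' : 'I_q) :
  (mxvec_index i j == mxvec_index i' j') = (i == i') && (j == j').
Proof.
apply/eqP/andP => [E|[/eqP -> /eqP ->]] //.
by have := congr1 (@unvec p q) E; rewrite !unvecE => -[-> ->].
Qed.
End Sums.

Section Main.
Variables (C : numClosedFieldType) (n : nat) (V : 'M[C]_(n * n)).
Local Notation I := 'I_n.
Local Notation ix := (@mxvec_index n n).

Definition VcD (a b a' b' : I) : C := V (ix a b) (ix a' b').
Definition VsD (a b a' b' : I) : C := (V (ix a' b') (ix a b))^*.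

Local Notation Vc := VcD.
Local Notation Vs := VsD.

Definition A2 (M : I -> I -> I -> I -> C) (G : I -> I -> C) a b :=
  \sum_a' \sum_b' M a b a' b' * G a' b'.
Definition A12 (M : I -> I -> I -> I -> C) (F : I -> I -> I -> C) a b c :=
  \sum_a' \sum_b' M a b a' b' * F a' b' c.
Definition A13 (M : I -> I -> I -> I -> C) (F : I -> I -> I -> C) a b c :=
  \sum_a' \sum_c' M a c a' c' * F a' b c'.
Definition A23 (M : I -> I -> I -> I -> C) (F : I -> I -> I -> C) a b c :=
  \sum_b' \sum_c' M b c b' c' * F a b' c'.

Definition v3 (F : I -> I -> I -> C) : 'cV[C]_(n * n * n) :=
  \col_K let: (a, b, c) := unvec3 K in F a b c.

Lemma v3E F a b c : v3 F (mxvec_index (ix a b) c) 0 = F a b c.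
Proof. by rewrite /v3 mxE unvec3E. Qed.



Lemma sum3 (G : 'I_(n * n * n) -> C) :
  \sum_K G K = \sum_a \sum_b \sum_c G (mxvec_index (ix a b) c).
Proof.
rewrite sum_mxvec sum_mxvec; apply: eq_bigr => a _.
by apply: eq_bigr => b _.
Qed.

Lemma v3_inj F G : v3 F = v3 G -> forall a b c, F a b c = G a b c.
Proof. by move=> E a b c; rewrite -!v3E E. Qed.

Lemma sum_delta (G : I -> C) a : \sum_a' G a' * (a == a')%:R = G a.
Proof.
rewrite (bigD1 a) //= eqxx mulr1 big1 ?addr0 // => i /negbTE.
by rewrite eq_sym => ->; rewrite mulr0.
Qed.

Lemma leg12E F : leg12 V *m v3 F = v3 (A12 Vc F).
Proof.
apply/colP => K; case/mxvec_indexP: K => ab c; case/mxvec_indexP: ab => a b.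
rewrite v3E mxE sum3 /A12; apply: eq_bigr => a' _; apply: eq_bigr => b' _.
rewrite (eq_bigr (fun c' => Vc a b a' b' * F a' b' c' * (c == c')%:R)).
  by rewrite sum_delta.
by move=> c' _; rewrite v3E mxE !unvec3E /= mulrAC.
Qed.

Lemma leg23E F : leg23 V *m v3 F = v3 (A23 Vc F).
Proof.
apply/colP => K; case/mxvec_indexP: K => ab c; case/mxvec_indexP: ab => a b.
rewrite v3E mxE sum3 /A23.
rewrite (eq_bigr (fun a' => (\sum_b' \sum_c' Vc b c b' c' * F a' b' c') * (a == a')%:R)).
  by rewrite sum_delta.
move=> a' _; rewrite big_distrl; apply: eq_bigr => b' _.
rewrite big_distrl; apply: eq_bigr => c' _.
by rewrite v3E mxE !unvec3E /= mulrAC.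
Qed.

Lemma leg13E F : leg13 V *m v3 F = v3 (A13 Vc F).
Proof.
apply/colP => K; case/mxvec_indexP: K => ab c; case/mxvec_indexP: ab => a b.
rewrite v3E mxE sum3 /A13; apply: eq_bigr => a' _.
rewrite (eq_bigr (fun b' => (\sum_c' Vc a c a' c' * F a' b' c') * (b == b')%:R)).
  by rewrite sum_delta.
move=> b' _; rewrite big_distrl; apply: eq_bigr => c' _.
by rewrite v3E mxE !unvec3E /= mulrAC.
Qed.

Hypothesis pent : leg12 V *m leg13 V *m leg23 V = leg23 V *m leg12 V.

Lemma pentF F a b c :
  A12 Vc (A13 Vc (A23 Vc F)) a b c = A23 Vc (A12 Vc F) a b c.
Proof.
have E : v3 (A12 Vc (A13 Vc (A23 Vc F))) = v3 (A23 Vc (A12 Vc F)).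
  rewrite -(leg12E (A13 Vc (A23 Vc F))) -(leg13E (A23 Vc F)) -(leg23E F).
  by rewrite -(leg23E (A12 Vc F)) -(leg12E F) !mulmxA pent.
exact: v3_inj E a b c.
Qed.

End Main.

Section Main3.
Variables (C : numClosedFieldType) (n : nat) (V : 'M[C]_(n * n)).
Local Notation I := 'I_n.
Local Notation ix := (@mxvec_index n n).
Local Notation Vc := (VcD V).
Local Notation Vs := (VsD V).

Definition tn (x y : 'cV[C]_n) (a b : I) := x a 0 * y b 0.

Lemma tensE (x y : 'cV[C]_n) a b : tens x y (ix a b) 0 = x a 0 * y b 0.
Proof. by rewrite /tens mxE mxvecE mxE big_ord1 mxE. Qed.

Lemma mulVE (X : 'cV[C]_(n * n)) a b :
  (V *m X) (ix a b) 0 = \sum_a' \sum_b' Vc a b a' b' * X (ix a' b') 0.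
Proof. by rewrite mxE sum_mxvec. Qed.

Lemma VfixP (x y : 'cV[C]_n) :
  V *m tens x y = tens x y <-> forall a b, A2 Vc (tn x y) a b = tn x y a b.
Proof.
split => [E a b|E].
  by rewrite /A2 /tn -tensE -E mulVE; do 2 (apply: eq_bigr => ? _); rewrite tensE.
apply/colP => k; case/mxvec_indexP: k => a b.
rewrite mulVE tensE -[x a 0 * y b 0]/(tn x y a b) -E.
by do 2 (apply: eq_bigr => ? _); rewrite tensE.
Qed.

Lemma A2_inv (M N : I -> I -> I -> I -> C) :
  (forall a b c d, \sum_a' \sum_b' M a b a' b' * N a' b' c d = ((a == c) && (b == d))%:R) ->
  forall G a b, A2 M (A2 N G) a b = G a b.
Proof.
move=> H G a b; rewrite /A2.
transitivity (\sum_c \sum_d (\sum_a' \sum_b' M a b a' b' * N a' b' c d) * G c d).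
  rewrite (eq_bigr (fun a' => \sum_b' \sum_c \sum_d M a b a' b' * N a' b' c d * G c d)); last first.
    move=> a' _; apply: eq_bigr => b' _; rewrite big_distrr; apply: eq_bigr => c _.
    by rewrite big_distrr; apply: eq_bigr => d _; exact: mulrA.
  rewrite [LHS]pair_bigA; under eq_bigr do rewrite pair_bigA.
  rewrite [RHS]pair_bigA; under [RHS]eq_bigr do rewrite pair_bigA big_distrl.
  rewrite exchange_big; apply: eq_bigr => -[a' b'] _; apply: eq_bigr => -[c d] _ /=.
  by [].
under eq_bigr do under eq_bigr do rewrite H.
rewrite (bigD1 a) //= (bigD1 b) //= !eqxx /= mul1r big1 ?addr0; last first.
  by move=> d /negbTE; rewrite eq_sym => ->; rewrite mul0r.
rewrite big1 ?addr0 // => c /negbTE; rewrite eq_sym => ->.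
by rewrite big1 // => d _; rewrite mul0r.
Qed.

Hypothesis Vu : V \is unitarymx.

Lemma VVt : V *m V^t* = 1%:M. Proof. exact/unitarymxP. Qed.
Lemma VtV : V^t* *m V = 1%:M. Proof. exact/mulmx1C/VVt. Qed.

Lemma VsVc G a b : A2 Vs (A2 Vc G) a b = G a b.
Proof.
apply: A2_inv => a1 b1 c d.
have := congr1 (fun M : 'M[C]_(n * n) => M (ix a1 b1) (ix c d)) VtV.
rewrite /= mxE mxE mxvec_index_inj sum_mxvec => <-.
by do 2 (apply: eq_bigr => ? _); rewrite /VsD !mxE.
Qed.

Lemma VcVs G a b : A2 Vc (A2 Vs G) a b = G a b.
Proof.
apply: A2_inv => a1 b1 c d.
have := congr1 (fun M : 'M[C]_(n * n) => M (ix a1 b1) (ix c d)) VVt.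
rewrite /= mxE mxE mxvec_index_inj sum_mxvec => <-.
by do 2 (apply: eq_bigr => ? _); rewrite /VsD !mxE.
Qed.

Lemma A2_ext (M : I -> I -> I -> I -> C) (G G' : I -> I -> C) : (forall a b, G a b = G' a b) -> forall a b, A2 M G a b = A2 M G' a b.
Proof. by move=> E a b; rewrite /A2; do 2 (apply: eq_bigr => ? _); rewrite E. Qed.

Lemma A12_fact (M : I -> I -> I -> I -> C) (F : I -> I -> I -> C) (G : I -> I -> C) (z : I -> C) : (forall a b c, F a b c = G a b * z c) ->
  forall a b c, A12 M F a b c = A2 M G a b * z c.
Proof.
move=> E a b c; rewrite /A12 /A2 big_distrl; apply: eq_bigr => a' _.
by rewrite big_distrl; apply: eq_bigr => b' _; rewrite E mulrA.
Qed.

Lemma A13_fact (M : I -> I -> I -> I -> C) (F : I -> I -> I -> C) (G : I -> I -> C) (y : I -> C) : (forall a b c, F a b c = G a c * y b) ->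
  forall a b c, A13 M F a b c = A2 M G a c * y b.
Proof.
move=> E a b c; rewrite /A13 /A2 big_distrl; apply: eq_bigr => a' _.
by rewrite big_distrl; apply: eq_bigr => b' _; rewrite E mulrA.
Qed.

Lemma A23_fact (M : I -> I -> I -> I -> C) (F : I -> I -> I -> C) (G : I -> I -> C) (x : I -> C) : (forall a b c, F a b c = x a * G b c) ->
  forall a b c, A23 M F a b c = x a * A2 M G b c.
Proof.
move=> E a b c; rewrite /A23 /A2 big_distrr; apply: eq_bigr => a' _.
by rewrite big_distrr; apply: eq_bigr => b' _; rewrite E mulrCA.
Qed.

Lemma A12_ext (M : I -> I -> I -> I -> C) (F F' : I -> I -> I -> C) : (forall a b c, F a b c = F' a b c) ->
  forall a b c, A12 M F a b c = A12 M F' a b c.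
Proof. by move=> E a b c; rewrite /A12; do 2 (apply: eq_bigr => ? _); rewrite E. Qed.
Lemma A13_ext (M : I -> I -> I -> I -> C) (F F' : I -> I -> I -> C) : (forall a b c, F a b c = F' a b c) ->
  forall a b c, A13 M F a b c = A13 M F' a b c.
Proof. by move=> E a b c; rewrite /A13; do 2 (apply: eq_bigr => ? _); rewrite E. Qed.
Lemma A23_ext (M : I -> I -> I -> I -> C) (F F' : I -> I -> I -> C) : (forall a b c, F a b c = F' a b c) ->
  forall a b c, A23 M F a b c = A23 M F' a b c.
Proof. by move=> E a b c; rewrite /A23; do 2 (apply: eq_bigr => ? _); rewrite E. Qed.



End Main3.

Section Main4.
Variables (C : numClosedFieldType) (n : nat) (V : 'M[C]_(n * n)).
Local Notation I := 'I_n.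
Local Notation ix := (@mxvec_index n n).
Local Notation Vc := (VcD V).
Local Notation Vs := (VsD V).
Hypothesis Vu : V \is unitarymx.
Hypothesis pent : leg12 V *m leg13 V *m leg23 V = leg23 V *m leg12 V.

Definition Vfix (x y : 'cV[C]_n) := V *m tens x y = tens x y.

Lemma A12_inv F a b c : A12 Vs (A12 Vc F) a b c = F a b c.
Proof. exact: (VsVc Vu (fun a b => F a b c)). Qed.
Lemma A12_inv' F a b c : A12 Vc (A12 Vs F) a b c = F a b c.
Proof. exact: (VcVs Vu (fun a b => F a b c)). Qed.
Lemma A23_inv F a b c : A23 Vs (A23 Vc F) a b c = F a b c.
Proof. exact: (VsVc Vu (fun b c => F a b c)). Qed.
Lemma A23_inv' F a b c : A23 Vc (A23 Vs F) a b c = F a b c.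
Proof. exact: (VcVs Vu (fun b c => F a b c)). Qed.

Lemma pentB F a b c :
  A13 Vc (A23 Vc F) a b c = A12 Vs (A23 Vc (A12 Vc F)) a b c.
Proof.
rewrite -A12_inv; apply: A12_ext => {}a {}b {}c.
exact: (pentF pent).
Qed.

Lemma pentC F a b c :
  A23 Vs (A12 Vc (A13 Vc F)) a b c = A12 Vc (A23 Vs F) a b c.
Proof.
rewrite -[RHS]A23_inv; apply: A23_ext => {}a {}b {}c.
rewrite -(pentF pent); apply: A12_ext => {}a {}b {}c.
by apply: A13_ext => {}a {}b {}c; rewrite A23_inv'.
Qed.

Lemma trans (x y z : 'cV[C]_n) : Vfix x y -> Vfix y z -> y != 0 -> Vfix x z.
Proof.
move=> /VfixP Hxy /VfixP Hyz y0; apply/VfixP.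
pose F a b c := x a 0 * y b 0 * z c 0.
have F23 a b c : A23 Vc F a b c = F a b c.
  rewrite (@A23_fact _ _ Vc _ (tn y z) (fun a => x a 0)); last by move=> *; rewrite /F mulrA.
  by rewrite Hyz /tn /F mulrA.
have F12 a b c : A12 Vc F a b c = F a b c.
  rewrite (@A12_fact _ _ Vc _ (tn x y) (fun c => z c 0)) //.
  by rewrite Hxy.
have F12s a b c : A12 Vs F a b c = F a b c.
  by rewrite -(@A12_ext _ _ Vs _ _ F12) A12_inv.
have F13 a b c : A13 Vc F a b c = F a b c.
  rewrite -[RHS]F12s -[LHS]A12_inv; apply: A12_ext => {}a {}b {}c.
  transitivity (A12 Vc (A13 Vc (A23 Vc F)) a b c).
    by apply: A12_ext => {}a {}b {}c; apply: A13_ext => {}a {}b {}c; rewrite F23.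
  rewrite (pentF pent) -[RHS]F23; apply: A23_ext => {}a {}b {}c.
  exact: F12.
have [b yb] : exists b, y b 0 != 0.
  apply/existsP; apply: contraNT y0 => /existsPn H; apply/eqP/colP => i.
  by rewrite mxE; apply/eqP; rewrite -[_ == _]negbK H.
move=> a c; have := F13 a b c.
rewrite (@A13_fact _ _ Vc _ (tn x z) (fun b => y b 0)); last by move=> *; rewrite /F /tn mulrAC.
by rewrite /F /tn mulrAC => /(mulIf yb).
Qed.

End Main4.

Section Main5.
Variables (C : numClosedFieldType) (n : nat) (V : 'M[C]_(n * n)).
Local Notation I := 'I_n.
Local Notation ix := (@mxvec_index n n).
Local Notation Vc := (VcD V).
Local Notation Vs := (VsD V).
Hypothesis Vu : V \is unitarymx.

Lemma sum2_swap (F : I -> I -> C) : \sum_a \sum_b F a b = \sum_b \sum_a F a b.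
Proof. exact: exchange_big. Qed.

Lemma A2_adj (H G : I -> I -> C) :
  \sum_a \sum_b (H a b)^* * A2 Vc G a b = \sum_a \sum_b (A2 Vs H a b)^* * G a b.
Proof.
rewrite /A2.
transitivity (\sum_a \sum_b \sum_a' \sum_b' (H a b)^* * Vc a b a' b' * G a' b').
  apply: eq_bigr => a _; apply: eq_bigr => b _; rewrite big_distrr.
  by apply: eq_bigr => a' _; rewrite big_distrr; apply: eq_bigr => b' _; exact: mulrA.
transitivity (\sum_a' \sum_b' \sum_a \sum_b (H a b)^* * Vc a b a' b' * G a' b').
  rewrite [LHS]pair_bigA [RHS]pair_bigA.
  under eq_bigr do rewrite pair_bigA.
  under [RHS]eq_bigr do rewrite pair_bigA.
  exact: exchange_big.
apply: eq_bigr => a' _; apply: eq_bigr => b' _.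
rewrite rmorph_sum big_distrl; apply: eq_bigr => a _.
rewrite rmorph_sum big_distrl; apply: eq_bigr => b _.
by rewrite /= /VsD rmorphM /= conjCK [_ * Vc _ _ _ _]mulrC.
Qed.

Lemma A2_isom (G : I -> I -> C) :
  \sum_a \sum_b (A2 Vc G a b)^* * A2 Vc G a b = \sum_a \sum_b (G a b)^* * G a b.
Proof.
rewrite A2_adj; apply: eq_bigr => a _; apply: eq_bigr => b _.
by rewrite (VsVc Vu).
Qed.

Lemma dnorm_expand (G : I -> I -> C) :
  \sum_a \sum_b (A2 Vc G a b - G a b)^* * (A2 Vc G a b - G a b) =
  (\sum_a \sum_b (G a b)^* * G a b) *+ 2
  - (\sum_a \sum_b (G a b)^* * A2 Vc G a b)^*
  - \sum_a \sum_b (G a b)^* * A2 Vc G a b.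
Proof.
have E a b : (A2 Vc G a b - G a b)^* * (A2 Vc G a b - G a b) =
   (A2 Vc G a b)^* * A2 Vc G a b + (G a b)^* * G a b
   - ((G a b)^* * A2 Vc G a b)^* - (G a b)^* * A2 Vc G a b.
  rewrite rmorphB rmorphM /= conjCK; ring.
under eq_bigr do under eq_bigr do rewrite E.
under eq_bigr do rewrite !sumrB big_split /=.
rewrite !sumrB big_split /= A2_isom.
have -> : (\sum_a \sum_b (G a b)^* * A2 Vc G a b)^* =
    \sum_a \sum_b ((G a b)^* * A2 Vc G a b)^*.
  by rewrite rmorph_sum; apply: eq_bigr => a _; rewrite rmorph_sum.
by rewrite mulr2n.
Qed.


Lemma nneg_sum2_eq0 (D : I -> I -> C) :
  \sum_a \sum_b (D a b)^* * D a b = 0 -> forall a b, D a b = 0.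
Proof.
move=> H a b.
have Hp : forall a, 0 <= \sum_b (D a b)^* * D a b.
  by move=> a'; apply: sumr_ge0 => b' _; rewrite mulrC mul_conjC_ge0.
have /psumr_eq0P H1 := H.
have /psumr_eq0P H2 := H1 (fun a _ => Hp a) a isT.
have Hq : forall b, true -> 0 <= (D a b)^* * D a b.
  by move=> b' _; rewrite mulrC mul_conjC_ge0.
have := H2 Hq b isT.
by move/eqP; rewrite mulrC mul_conjC_eq0 => /eqP.
Qed.

Lemma fix_family k (G : 'I_k -> I -> I -> C) :
  \sum_i \sum_a \sum_b (G i a b)^* * A2 Vc (G i) a b =
  \sum_i \sum_a \sum_b (G i a b)^* * G i a b ->
  forall i a b, A2 Vc (G i) a b = G i a b.
Proof.
move=> H.
pose N := \sum_i \sum_a \sum_b (G i a b)^* * G i a b.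
have NR : N^* = N.
  rewrite /N rmorph_sum; apply: eq_bigr => i _; rewrite rmorph_sum.
  apply: eq_bigr => a _; rewrite rmorph_sum; apply: eq_bigr => b _.
  by rewrite rmorphM /= conjCK mulrC.
have Z : \sum_i \sum_a \sum_b (A2 Vc (G i) a b - G i a b)^* * (A2 Vc (G i) a b - G i a b) = 0.
  under eq_bigr do rewrite dnorm_expand.
  rewrite !sumrB sumrMnl -rmorph_sum H -/N /= NR.
  by rewrite mulr2n -addrA -opprD subrr.
have Hp : forall i, 0 <= \sum_a \sum_b (A2 Vc (G i) a b - G i a b)^* * (A2 Vc (G i) a b - G i a b).
  move=> i; apply: sumr_ge0 => a _; apply: sumr_ge0 => b _.
  by rewrite mulrC mul_conjC_ge0.
move=> i a b; have /psumr_eq0P H1 := Z.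
have := nneg_sum2_eq0 (H1 (fun i _ => Hp i) i isT) a b.
by move/eqP; rewrite subr_eq0 => /eqP.
Qed.

End Main5.

Section Main6.
Variables (C : numClosedFieldType) (n : nat) (V : 'M[C]_(n * n)).
Local Notation I := 'I_n.
Local Notation ix := (@mxvec_index n n).
Local Notation Vc := (VcD V).
Local Notation Vs := (VsD V).
Hypothesis Vu : V \is unitarymx.
Hypothesis pent : leg12 V *m leg13 V *m leg23 V = leg23 V *m leg12 V.

Definition K1 (f : 'cV[C]_n) (F : I -> I -> I -> C) a b := \sum_p (f p 0)^* * F p a b.
Definition K2 (f : 'cV[C]_n) (F : I -> I -> I -> C) p b := \sum_a (f a 0)^* * F p a b.
Definition K3 (f : 'cV[C]_n) (F : I -> I -> I -> C) a b := \sum_c (f c 0)^* * F a b c.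

Lemma sum_pull (x : C) (F : I -> I -> C) :
  x * (\sum_a' \sum_b' F a' b') = \sum_a' \sum_b' x * F a' b'.
Proof.
rewrite big_distrr; apply: eq_bigr => a' _; rewrite big_distrr.
by apply: eq_bigr.
Qed.

Lemma sum3_swap (F : I -> I -> I -> C) :
  \sum_p \sum_a' \sum_b' F p a' b' = \sum_a' \sum_b' \sum_p F p a' b'.
Proof.
rewrite exchange_big; apply: eq_bigr => a' _; exact: exchange_big.
Qed.

Lemma K1_A23 M f F a b : K1 f (A23 M F) a b = A2 M (K1 f F) a b.
Proof.
rewrite /K1 /A23 /A2.
under eq_bigr do rewrite sum_pull.
rewrite sum3_swap; apply: eq_bigr => a' _; apply: eq_bigr => b' _.
by rewrite big_distrr; apply: eq_bigr => p _ /=; rewrite mulrCA.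
Qed.

Lemma K2_A13 M f F p b : K2 f (A13 M F) p b = A2 M (K2 f F) p b.
Proof.
rewrite /K2 /A13 /A2.
under eq_bigr do rewrite sum_pull.
rewrite sum3_swap; apply: eq_bigr => a' _; apply: eq_bigr => b' _.
by rewrite big_distrr; apply: eq_bigr => c _ /=; rewrite mulrCA.
Qed.

Lemma K3_A12 M f F a b : K3 f (A12 M F) a b = A2 M (K3 f F) a b.
Proof.
rewrite /K3 /A12 /A2.
under eq_bigr do rewrite sum_pull.
rewrite sum3_swap; apply: eq_bigr => a' _; apply: eq_bigr => b' _.
by rewrite big_distrr; apply: eq_bigr => c _ /=; rewrite mulrCA.
Qed.

Lemma A2_adj2 (H G : I -> I -> C) :
  \sum_a \sum_b (H a b)^* * A2 Vs G a b = \sum_a \sum_b (A2 Vc H a b)^* * G a b.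
Proof.
rewrite /A2.
transitivity (\sum_a \sum_b \sum_a' \sum_b' (H a b)^* * Vs a b a' b' * G a' b').
  apply: eq_bigr => a _; apply: eq_bigr => b _; rewrite big_distrr.
  by apply: eq_bigr => a' _; rewrite big_distrr; apply: eq_bigr => b' _; exact: mulrA.
transitivity (\sum_a' \sum_b' \sum_a \sum_b (H a b)^* * Vs a b a' b' * G a' b').
  rewrite [LHS]pair_bigA [RHS]pair_bigA.
  under eq_bigr do rewrite pair_bigA.
  under [RHS]eq_bigr do rewrite pair_bigA.
  exact: exchange_big.
apply: eq_bigr => a' _; apply: eq_bigr => b' _.
rewrite rmorph_sum big_distrl; apply: eq_bigr => a _.
rewrite rmorph_sum big_distrl; apply: eq_bigr => b _.
by rewrite /= /VsD rmorphM /= /VcD; ring.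
Qed.


Definition Tm (f : 'cV[C]_n) : 'M[C]_n :=
  \matrix_(b, b') \sum_a \sum_a' (f a 0)^* * Vc a b a' b' * f a' 0.
Definition Sm (f : 'cV[C]_n) : 'M[C]_n :=
  \matrix_(a, a') \sum_b \sum_b' (f b 0)^* * Vc a b a' b' * f b' 0.

Lemma Tm_apply f (x : 'cV[C]_n) b :
  (Tm f *m x) b 0 = \sum_a (f a 0)^* * A2 Vc (tn f x) a b.
Proof.
rewrite mxE; under eq_bigr do rewrite mxE.
transitivity (\sum_b' \sum_a \sum_a' (f a 0)^* * Vc a b a' b' * f a' 0 * x b' 0).
  apply: eq_bigr => b' _; rewrite big_distrl; apply: eq_bigr => a _.
  by rewrite big_distrl.
rewrite exchange_big; apply: eq_bigr => a _ /=.
rewrite /A2 /tn big_distrr exchange_big; apply: eq_bigr => a' _ /=.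
rewrite big_distrr; apply: eq_bigr => b' _ /=; ring.
Qed.

Lemma sum3_rev (F : I -> I -> I -> C) :
  \sum_x \sum_y \sum_z F x y z = \sum_z \sum_y \sum_x F x y z.
Proof.
rewrite exchange_big; under eq_bigr do rewrite exchange_big.
exact: exchange_big.
Qed.

Lemma TmC_apply f (x : 'cV[C]_n) b :
  ((Tm f)^t* *m x) b 0 = \sum_a (f a 0)^* * A2 Vs (tn f x) a b.
Proof.
rewrite mxE; under eq_bigr do rewrite !mxE rmorph_sum.
transitivity (\sum_b' \sum_a \sum_a' (f a' 0)^* * Vs a' b a b' * f a 0 * x b' 0).
  apply: eq_bigr => b' _; rewrite big_distrl; apply: eq_bigr => a _.
  rewrite rmorph_sum big_distrl; apply: eq_bigr => a' _ /=.
  by rewrite !rmorphM /= conjCK /VsD /VcD; ring.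
rewrite sum3_rev; apply: eq_bigr => a' _ /=.
rewrite /A2 /tn big_distrr; apply: eq_bigr => a _ /=.
rewrite big_distrr; apply: eq_bigr => b' _ /=; ring.
Qed.

Lemma Sm_apply f (x : 'cV[C]_n) a :
  (Sm f *m x) a 0 = \sum_b (f b 0)^* * A2 Vc (tn x f) a b.
Proof.
rewrite mxE; under eq_bigr do rewrite mxE.
transitivity (\sum_a' \sum_b \sum_b' (f b 0)^* * Vc a b a' b' * f b' 0 * x a' 0).
  apply: eq_bigr => a' _; rewrite big_distrl; apply: eq_bigr => b _.
  by rewrite big_distrl.
rewrite exchange_big; apply: eq_bigr => b _ /=.
rewrite /A2 /tn big_distrr; apply: eq_bigr => a' _ /=.
rewrite big_distrr; apply: eq_bigr => b' _ /=; ring.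
Qed.

Lemma SmC_apply f (x : 'cV[C]_n) a :
  ((Sm f)^t* *m x) a 0 = \sum_b (f b 0)^* * A2 Vs (tn x f) a b.
Proof.
rewrite mxE; under eq_bigr do rewrite !mxE rmorph_sum.
transitivity (\sum_a' \sum_b \sum_b' (f b' 0)^* * Vs a b' a' b * f b 0 * x a' 0).
  apply: eq_bigr => a' _; rewrite big_distrl; apply: eq_bigr => b _.
  rewrite rmorph_sum big_distrl; apply: eq_bigr => b' _ /=.
  by rewrite !rmorphM /= conjCK /VsD /VcD; ring.
rewrite sum3_rev; apply: eq_bigr => b' _ /=.
rewrite /A2 /tn big_distrr exchange_big; apply: eq_bigr => a' _ /=.
rewrite big_distrr; apply: eq_bigr => b _ /=; ring.
Qed.



Lemma Vs_fix (G : I -> I -> C) : (forall a b, A2 Vc G a b = G a b) ->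
  forall a b, A2 Vs G a b = G a b.
Proof.
move=> H a b; rewrite -[RHS](VsVc Vu G); apply: A2_ext => {}a {}b.
by rewrite H.
Qed.

Lemma Tm_idem f (x : 'cV[C]_n) :
  (forall a b, A2 Vc (tn f f) a b = tn f f a b) ->
  \sum_a (f a 0)^* * f a 0 = 1 ->
  Tm f *m (Tm f *m x) = Tm f *m x.
Proof.
move=> Hff Hn; apply/colP => b0.
set eta := Tm f *m x.
pose F' (u v w : I) := f u 0 * f v 0 * x w 0.
have F'23 p a b : A23 Vc F' p a b = f p 0 * A2 Vc (tn f x) a b.
  by rewrite (@A23_fact _ _ Vc F' (tn f x) (fun u => f u 0)) // => *; rewrite /F' /tn mulrA.
have F'12 p a b : A12 Vc F' p a b = F' p a b.
  rewrite (@A12_fact _ _ Vc _ (tn f f) (fun b => x b 0)) //.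
  by rewrite Hff.
have S1 p b : tn f eta p b = K2 f (A23 Vc F') p b.
  rewrite /tn /eta Tm_apply /K2 big_distrr; apply: eq_bigr => a _.
  by rewrite F'23 mulrCA.
have S2 p b : A2 Vc (tn f eta) p b = K2 f (A13 Vc (A23 Vc F')) p b.
  by rewrite K2_A13; apply: A2_ext.
have S3 p a b : A13 Vc (A23 Vc F') p a b = A12 Vs (A23 Vc F') p a b.
  rewrite (pentB Vu pent); apply: A12_ext => {}p {}a {}b.
  by apply: A23_ext => {}p {}a {}b; rewrite F'12.
rewrite Tm_apply.
under eq_bigr do rewrite S2 /K2 big_distrr.
transitivity (\sum_p \sum_a (tn f f p a)^* * A2 Vs (fun p a => A23 Vc F' p a b0) p a).
  apply: eq_bigr => p _; apply: eq_bigr => a _.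
  by rewrite S3 /tn rmorphM /= mulrA.
rewrite A2_adj2.
under eq_bigr do under eq_bigr do rewrite Hff F'23 /tn rmorphM /=.
rewrite Tm_apply -[RHS]mul1r -Hn big_distrl; apply: eq_bigr => p _ /=.
rewrite big_distrr; apply: eq_bigr => a _ /=; ring.
Qed.

Lemma Sm_idem f (x : 'cV[C]_n) :
  (forall a b, A2 Vc (tn f f) a b = tn f f a b) ->
  \sum_a (f a 0)^* * f a 0 = 1 ->
  Sm f *m (Sm f *m x) = Sm f *m x.
Proof.
move=> Hff Hn; apply/colP => a0.
set sig := Sm f *m x.
pose F (u v w : I) := x u 0 * f v 0 * f w 0.
have F13 a b c : A13 Vc F a b c = A2 Vc (tn x f) a c * f b 0.
  by rewrite (@A13_fact _ _ Vc F (tn x f) (fun u => f u 0)) // => *; rewrite /F /tn mulrAC.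
have F23 a b c : A23 Vc F a b c = F a b c.
  rewrite (@A23_fact _ _ Vc _ (tn f f) (fun a => x a 0)); last first.
    by move=> *; rewrite /F /tn mulrA.
  by rewrite Hff /F /tn mulrA.
have F12 a b c : A12 Vc F a b c = A2 Vc (tn x f) a b * f c 0.
  by rewrite (@A12_fact _ _ Vc F (tn x f) (fun u => f u 0)).
have S1 a b : tn sig f a b = K3 f (A13 Vc F) a b.
  rewrite /tn /sig Sm_apply /K3 big_distrl; apply: eq_bigr => c _.
  by rewrite F13 mulrA.
have S2 a b : A2 Vc (tn sig f) a b = K3 f (A12 Vc (A13 Vc F)) a b.
  by rewrite K3_A12; apply: A2_ext.
have S3 a b c : A12 Vc (A13 Vc F) a b c = A23 Vc (A12 Vc F) a b c.
  rewrite -(pentF pent); apply: A12_ext => {}a {}b {}c.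
  by apply: A13_ext => {}a {}b {}c; rewrite F23.
rewrite Sm_apply.
under eq_bigr do rewrite S2 /K3 big_distrr.
transitivity (\sum_b \sum_c (tn f f b c)^* * A2 Vc (fun b c => A12 Vc F a0 b c) b c).
  apply: eq_bigr => b _; apply: eq_bigr => c _.
  by rewrite S3 /tn rmorphM /= mulrA.
rewrite A2_adj.
under eq_bigr do under eq_bigr do rewrite (Vs_fix Hff) F12 /tn rmorphM /=.
rewrite Sm_apply -[RHS]mulr1 -Hn big_distrl; apply: eq_bigr => b _ /=.
rewrite big_distrr; apply: eq_bigr => c _ /=.
rewrite /tn; ring.
Qed.

End Main6.

Section Main7.
Variables (C : numClosedFieldType) (n : nat) (V : 'M[C]_(n * n)).
Local Notation I := 'I_n.
Local Notation ix := (@mxvec_index n n).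
Local Notation Vc := (VcD V).
Local Notation Vs := (VsD V).
Hypothesis Vu : V \is unitarymx.
Hypothesis pent : leg12 V *m leg13 V *m leg23 V = leg23 V *m leg12 V.

Local Notation Fix x y := (forall a b, A2 Vc (tn x y) a b = tn x y a b).
Local Notation nrm1 f := (\sum_a ((f : 'cV[C]_n) a 0)^* * f a 0 = 1).

Lemma T_of_fix f x : Fix f x -> nrm1 f -> Tm V f *m x = x.
Proof.
move=> H Hn; apply/colP => b; rewrite Tm_apply.
under eq_bigr do rewrite H /tn mulrA.
by rewrite -big_distrl /= Hn mul1r.
Qed.

Lemma TC_of_fix f x : Fix f x -> nrm1 f -> (Tm V f)^t* *m x = x.
Proof.
move=> H Hn; apply/colP => b; rewrite TmC_apply.
under eq_bigr do rewrite (Vs_fix Vu H) /tn mulrA.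
by rewrite -big_distrl /= Hn mul1r.
Qed.

Lemma S_of_fix f x : Fix x f -> nrm1 f -> Sm V f *m x = x.
Proof.
move=> H Hn; apply/colP => a; rewrite Sm_apply.
under eq_bigr do rewrite H /tn mulrCA.
by rewrite -big_distrr /= Hn mulr1.
Qed.

Lemma SC_of_fix f x : Fix x f -> nrm1 f -> (Sm V f)^t* *m x = x.
Proof.
move=> H Hn; apply/colP => a; rewrite SmC_apply.
under eq_bigr do rewrite (Vs_fix Vu H) /tn mulrCA.
by rewrite -big_distrr /= Hn mulr1.
Qed.

Lemma fix_of_T f x : Tm V f *m x = x -> nrm1 f -> Fix f x.
Proof.
move=> H Hn a b.
apply: (@fix_family _ _ _ Vu 1 (fun _ => tn f x) _ ord0 a b).
rewrite !big_ord1.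
transitivity (\sum_b (x b 0)^* * (Tm V f *m x) b 0).
  rewrite exchange_big; apply: eq_bigr => b' _; rewrite Tm_apply big_distrr.
  by apply: eq_bigr => a' _; rewrite /tn rmorphM /=; ring.
rewrite H; transitivity ((\sum_a (f a 0)^* * f a 0) * \sum_b (x b 0)^* * x b 0).
  by rewrite Hn mul1r.
rewrite big_distrl; apply: eq_bigr => a' _; rewrite big_distrr.
by apply: eq_bigr => b' _ /=; rewrite /tn rmorphM /=; ring.
Qed.

Lemma fix_of_S f x : Sm V f *m x = x -> nrm1 f -> Fix x f.
Proof.
move=> H Hn a b.
apply: (@fix_family _ _ _ Vu 1 (fun _ => tn x f) _ ord0 a b).
rewrite !big_ord1.
transitivity (\sum_a (x a 0)^* * (Sm V f *m x) a 0).
  apply: eq_bigr => a' _; rewrite Sm_apply big_distrr.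
  by apply: eq_bigr => b' _; rewrite /tn rmorphM /=; ring.
rewrite H; transitivity ((\sum_a (f a 0)^* * f a 0) * \sum_b (x b 0)^* * x b 0).
  by rewrite Hn mul1r.
rewrite big_distrr; apply: eq_bigr => a' _; rewrite big_distrl.
by apply: eq_bigr => b' _ /=; rewrite /tn rmorphM /=; ring.
Qed.

Lemma col_mul m p q j (A : 'M[C]_(m, p)) (B : 'M[C]_(p, q)) :
  col j (A *m B) = A *m col j B.
Proof. by rewrite !colE mulmxA. Qed.

Lemma selfadj (T : 'M[C]_n) : T *m T = T ->
  (forall x : 'cV[C]_n, T *m x = x -> T^t* *m x = x) -> T^t* = T.
Proof.
move=> TT H.
have E : T^t* *m T = T.
  apply/matrixP => i j.
  have := H (col j T); rewrite -col_mul TT => /(_ erefl).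
  by rewrite -col_mul => /colP /(_ i); rewrite !mxE.
have : (T^t* *m T)^t* = T^t* by rewrite E.
by rewrite trmx_mul map_mxM trmxCK E.
Qed.

Lemma T_selfadj f : Fix f f -> nrm1 f -> (Tm V f)^t* = Tm V f.
Proof.
move=> Hff Hn; apply: selfadj.
  by apply/matrixP => i j; have := Tm_idem Vu pent (col j 1%:M) Hff Hn;
    rewrite !mulmxA -!col_mul !mulmx1 => /colP /(_ i); rewrite !mxE.
by move=> x Hx; apply: TC_of_fix => //; apply: fix_of_T.
Qed.

Lemma S_selfadj f : Fix f f -> nrm1 f -> (Sm V f)^t* = Sm V f.
Proof.
move=> Hff Hn; apply: selfadj.
  by apply/matrixP => i j; have := Sm_idem Vu pent (col j 1%:M) Hff Hn;
    rewrite !mulmxA -!col_mul !mulmx1 => /colP /(_ i); rewrite !mxE.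
by move=> x Hx; apply: SC_of_fix => //; apply: fix_of_S.
Qed.

End Main7.

Section Main8.
Variables (C : numClosedFieldType) (n : nat) (V : 'M[C]_(n * n)).
Local Notation I := 'I_n.
Local Notation ix := (@mxvec_index n n).
Local Notation Vc := (VcD V).
Local Notation Vs := (VsD V).
Hypothesis Vu : V \is unitarymx.
Hypothesis pent : leg12 V *m leg13 V *m leg23 V = leg23 V *m leg12 V.

Local Notation Fix x y := (forall a b, A2 Vc (tn x y) a b = tn x y a b).

Lemma T_pres f x w : Fix x w -> Fix f w -> Fix (Tm V f *m x) w.
Proof.
move=> Hxw Hfw b0 c0.
pose F (u v z : I) := f u 0 * x v 0 * w z 0.
have F12 p b c : A12 Vc F p b c = A2 Vc (tn f x) p b * w c 0.
  by rewrite (@A12_fact _ _ Vc F (tn f x) (fun u => w u 0)).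
have F23 p b c : A23 Vc F p b c = F p b c.
  rewrite (@A23_fact _ _ Vc F (tn x w) (fun u => f u 0)); last first.
    by move=> *; rewrite /F /tn mulrA.
  by rewrite Hxw /F /tn mulrA.
have F13 p b c : A13 Vc F p b c = F p b c.
  rewrite (@A13_fact _ _ Vc F (tn f w) (fun u => x u 0)); last first.
    by move=> *; rewrite /F /tn mulrAC.
  by rewrite Hfw /F /tn mulrAC.
have S1 b c : tn (Tm V f *m x) w b c = K1 f (A12 Vc F) b c.
  rewrite /tn Tm_apply /K1 big_distrl; apply: eq_bigr => p _.
  by rewrite F12 mulrA.
rewrite (A2_ext _ S1) -K1_A23 S1 /K1; apply: eq_bigr => p _; congr (_ * _).
rewrite -(pentF pent); apply: A12_ext => {}p {}b {}c.
by rewrite (A13_ext _ F23) F13.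
Qed.

Lemma SC_pres f x w : Fix w f -> Fix w x -> Fix w ((Sm V f)^t* *m x).
Proof.
move=> Hwf Hwx a0 b0.
pose F (u v z : I) := w u 0 * x v 0 * f z 0.
have F23 a b c : A23 Vs F a b c = w a 0 * A2 Vs (tn x f) b c.
  by rewrite (@A23_fact _ _ Vs F (tn x f) (fun u => w u 0)) // => *; rewrite /F /tn mulrA.
have F13 a b c : A13 Vc F a b c = F a b c.
  rewrite (@A13_fact _ _ Vc F (tn w f) (fun u => x u 0)); last first.
    by move=> *; rewrite /F /tn mulrAC.
  by rewrite Hwf /F /tn mulrAC.
have F12 a b c : A12 Vc F a b c = F a b c.
  rewrite (@A12_fact _ _ Vc F (tn w x) (fun u => f u 0)) //.
  by rewrite Hwx.
have S1 a b : tn w ((Sm V f)^t* *m x) a b = K3 f (A23 Vs F) a b.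
  rewrite /tn SmC_apply /K3 big_distrr; apply: eq_bigr => c _.
  by rewrite F23 mulrCA.
rewrite (A2_ext _ S1) -K3_A12 S1 /K3; apply: eq_bigr => c _; congr (_ * _).
rewrite -(pentC Vu pent); apply: A23_ext => {}a {}b {}c.
by rewrite (A12_ext _ F13) F12.
Qed.

End Main8.

Section Main9.
Variables (C : numClosedFieldType) (n : nat) (V : 'M[C]_(n * n)).
Local Notation I := 'I_n.
Local Notation ix := (@mxvec_index n n).
Local Notation Vc := (VcD V).
Local Notation Vs := (VsD V).
Hypothesis Vu : V \is unitarymx.
Hypothesis pent : leg12 V *m leg13 V *m leg23 V = leg23 V *m leg12 V.

Local Notation Fix x y := (forall a b, A2 Vc (tn x y) a b = tn x y a b).

Definition Ym : 'M[C]_n := \matrix_(j, k) \sum_i Vc i j i k.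

Lemma VcVs_delta a b c d :
  \sum_a' \sum_b' Vc a b a' b' * Vs a' b' c d = ((a == c) && (b == d))%:R.
Proof.
have := congr1 (fun M : 'M[C]_(n * n) => M (ix a b) (ix c d)) (VVt Vu).
rewrite /= mxE mxE mxvec_index_inj sum_mxvec => <-.
by do 2 (apply: eq_bigr => ? _); rewrite /VsD !mxE.
Qed.

Lemma sum_delta' (G : I -> C) a : \sum_a' (a' == a)%:R * G a' = G a.
Proof.
rewrite -[RHS](sum_delta G a); apply: eq_bigr => a' _.
by rewrite eq_sym mulrC.
Qed.

Lemma A2_delta (M : I -> I -> I -> I -> C) i l x y :
  A2 M (fun a b => (a == i)%:R * (b == l)%:R) x y = M x y i l.
Proof.
rewrite /A2 -(sum_delta' (fun a' => M x y a' l) i); apply: eq_bigr => a' _.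
rewrite -(sum_delta' (fun b' => M x y a' b') l) big_distrr.
by apply: eq_bigr => b' _ /=; ring.
Qed.

Lemma sum3_rot (F : I -> I -> I -> C) :
  \sum_x \sum_y \sum_z F x y z = \sum_z \sum_x \sum_y F x y z.
Proof. rewrite sum3_rev; apply: eq_bigr => z _; exact: exchange_big. Qed.

Lemma sum4_swap (F : I -> I -> I -> I -> C) :
  \sum_x \sum_y \sum_z \sum_w F x y z w = \sum_z \sum_w \sum_x \sum_y F x y z w.
Proof.
rewrite [LHS]pair_bigA [RHS]pair_bigA.
under eq_bigr do rewrite pair_bigA.
under [RHS]eq_bigr do rewrite pair_bigA.
exact: exchange_big.
Qed.

Lemma Y_sq : Ym *m Ym = n%:R *: Ym.
Proof.
apply/matrixP => j k; rewrite !mxE.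
pose F (i l : I) (x y z : I) : C := (x == i)%:R * (y == l)%:R * (z == k)%:R.
have L i l : A13 Vc (A23 Vc (F i l)) i l j = \sum_z Vc i j i z * Vc l z l k.
  have E x y z : A23 Vc (F i l) x y z = (x == i)%:R * Vc y z l k.
    rewrite (@A23_fact _ _ Vc (F i l) (fun y z => (y == l)%:R * (z == k)%:R)
               (fun x => (x == i)%:R)); last by move=> *; rewrite /F mulrA.
    by rewrite A2_delta.
  rewrite /A13; under eq_bigr do under eq_bigr do rewrite E.
  rewrite exchange_big; apply: eq_bigr => z _.
  rewrite -(sum_delta' (fun x' => Vc i j x' z * Vc l z l k) i).
  by apply: eq_bigr => x' _ /=; ring.
have R i l : A12 Vs (A23 Vc (A12 Vc (F i l))) i l j =
    \sum_x \sum_y Vs i l x y * \sum_y' Vc y j y' k * Vc x y' i l.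
  have E1 x y z : A12 Vc (F i l) x y z = Vc x y i l * (z == k)%:R.
    by rewrite (@A12_fact _ _ Vc (F i l) (fun x y => (x == i)%:R * (y == l)%:R)
               (fun z => (z == k)%:R)) // A2_delta.
  have E2 x y z : A23 Vc (A12 Vc (F i l)) x y z = \sum_y' Vc y z y' k * Vc x y' i l.
    rewrite /A23; apply: eq_bigr => y' _; under eq_bigr do rewrite E1.
    rewrite -(sum_delta' (fun z' => Vc y z y' z' * Vc x y' i l) k).
    by apply: eq_bigr => z' _ /=; ring.
  rewrite /A12; apply: eq_bigr => x _; apply: eq_bigr => y _.
  by rewrite E2.
have LR i l : \sum_z Vc i j i z * Vc l z l k =
    \sum_x \sum_y Vs i l x y * \sum_y' Vc y j y' k * Vc x y' i l.
  by rewrite -L -R (pentB Vu pent).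
transitivity (\sum_i \sum_l \sum_z Vc i j i z * Vc l z l k).
  rewrite sum3_rot; apply: eq_bigr => z _.
  by rewrite !mxE big_distrl; apply: eq_bigr => i _; rewrite big_distrr.
transitivity (\sum_i \sum_l \sum_x \sum_y Vs i l x y * \sum_y' Vc y j y' k * Vc x y' i l).
  by apply: eq_bigr => i _; apply: eq_bigr => l _; apply: LR.
rewrite sum4_swap.
transitivity (\sum_(x : I) \sum_(y : I) Vc y j y k).
  apply: eq_bigr => x _; apply: eq_bigr => y _.
  transitivity (\sum_i \sum_l \sum_y' Vc y j y' k * (Vc x y' i l * Vs i l x y)).
    apply: eq_bigr => i _; apply: eq_bigr => l _; rewrite big_distrr.
    by apply: eq_bigr => y' _ /=; ring.
  rewrite sum3_rot.
  transitivity (\sum_y' Vc y j y' k * ((x == x) && (y' == y))%:R).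
    apply: eq_bigr => y' _; rewrite -VcVs_delta big_distrr.
    by apply: eq_bigr => i _; rewrite big_distrr.
  rewrite eqxx /= -(sum_delta (fun y' => Vc y j y' k) y).
  by apply: eq_bigr => y' _; rewrite eq_sym.
by rewrite sumr_const card_ord -mulr_natl; ring.
Qed.


Lemma A2_G (x : 'cV[C]_n) i a b :
  A2 Vc (fun a b => (a == i)%:R * x b 0) a b = \sum_b' Vc a b i b' * x b' 0.
Proof.
rewrite /A2 exchange_big; apply: eq_bigr => b' _.
rewrite -(sum_delta' (fun a' => Vc a b a' b' * x b' 0) i).
by apply: eq_bigr => a' _ /=; ring.
Qed.

Lemma Y_cofix (x : 'cV[C]_n) : Ym *m x = n%:R *: x -> forall y, Fix y x.
Proof.
move=> HY.
pose G (i : 'I_n) (a b : I) : C := (a == i)%:R * x b 0.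
have HG := @fix_family _ _ _ Vu n G.
have H : forall i a b, A2 Vc (G i) a b = G i a b.
  apply: HG.
  transitivity (\sum_i \sum_b (x b 0)^* * \sum_b' Vc i b i b' * x b' 0).
    apply: eq_bigr => i _.
    rewrite (bigD1 i) //= [X in _ + X]big1 ?addr0; last first.
      move=> a /= Hai; apply: big1 => b _.
      by rewrite /G (negbTE Hai) mul0r rmorph0 mul0r.
    apply: eq_bigr => b _; rewrite (A2_G x i i b) /G eqxx mul1r.
    done.
  transitivity (\sum_b (x b 0)^* * (Ym *m x) b 0).
    rewrite exchange_big; apply: eq_bigr => b _; rewrite -big_distrr /=.
    congr (_ * _); rewrite mxE; under [RHS]eq_bigr do rewrite mxE big_distrl.
    rewrite exchange_big; apply: eq_bigr => i _ /=.
    by apply: eq_bigr.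
  rewrite HY.
  transitivity (\sum_(i : 'I_n) \sum_b (x b 0)^* * x b 0).
    rewrite [RHS]sumr_const card_ord -[in RHS]mulr_natl mulr_sumr; apply: eq_bigr => b _.
    by rewrite mxE /=; ring.
  apply: eq_bigr => i _.
  rewrite [RHS](bigD1 i) //= [X in _ + X]big1 ?addr0; last first.
    move=> a /= Hai; apply: big1 => b _.
    by rewrite /G (negbTE Hai) mul0r rmorph0 mul0r.
  by apply: eq_bigr => b _; rewrite /G eqxx mul1r.
move=> y a b.
transitivity (\sum_a' y a' 0 * A2 Vc (G a') a b).
  under [RHS]eq_bigr do rewrite A2_G.
  rewrite /A2 /tn; apply: eq_bigr => a' _; rewrite big_distrr.
  by apply: eq_bigr => b' _ /=; ring.
under eq_bigr do rewrite H.
rewrite /tn /G -(sum_delta' (fun a' => y a' 0 * x b 0) a).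
by apply: eq_bigr => a' _; rewrite eq_sym; ring.
Qed.


End Main9.

Section IP.
Variables (C : numClosedFieldType) (n : nat).

Lemma ipE (u v : 'cV[C]_n) : ip u v = \sum_i u i 0 * (v i 0)^*.
Proof. by rewrite /ip dotmxE mxE; apply: eq_bigr => i _; rewrite !mxE. Qed.

Lemma ip_conj (u v : 'cV[C]_n) : ip v u = (ip u v)^*.
Proof.
rewrite !ipE rmorph_sum; apply: eq_bigr => i _.
by rewrite rmorphM /= conjCK mulrC.
Qed.

Lemma ipDl k (u w v : 'cV[C]_n) : ip (k *: u + w) v = k * ip u v + ip w v.
Proof.
rewrite !ipE mulr_sumr -big_split; apply: eq_bigr => i _ /=.
by rewrite !mxE mulrDl mulrA.
Qed.

Lemma ipDr k (u w v : 'cV[C]_n) : ip v (k *: u + w) = k^* * ip v u + ip v w.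
Proof. by rewrite ip_conj ipDl rmorphD rmorphM /= -!ip_conj. Qed.

Lemma ip0l (v : 'cV[C]_n) : ip 0 v = 0.
Proof. by rewrite ipE big1 // => i _; rewrite mxE mul0r. Qed.

Lemma ip0r (v : 'cV[C]_n) : ip v 0 = 0.
Proof. by rewrite ip_conj ip0l rmorph0. Qed.

Lemma ipBl (u w v : 'cV[C]_n) : ip (u - w) v = ip u v - ip w v.
Proof.
have := ipDl (-1) w u v; rewrite scaleN1r addrC => ->.
by rewrite mulN1r addrC.
Qed.

Lemma ip_mulC (M : 'M[C]_n) (x y : 'cV[C]_n) : ip (M *m x) y = ip x (M^t* *m y).
Proof.
rewrite !ipE.
under eq_bigr do rewrite mxE big_distrl.
under [RHS]eq_bigr do rewrite mxE rmorph_sum big_distrr.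
rewrite exchange_big; apply: eq_bigr => i _; apply: eq_bigr => j _ /=.
by rewrite !mxE rmorphM /= conjCK; ring.
Qed.

Lemma ip_ge0 (x : 'cV[C]_n) : 0 <= ip x x.
Proof. by rewrite ipE; apply: sumr_ge0 => i _; rewrite mul_conjC_ge0. Qed.

Lemma ip_eq0 (x : 'cV[C]_n) : ip x x = 0 -> x = 0.
Proof.
rewrite ipE => /psumr_eq0P H; apply/colP => i; rewrite mxE.
have /eqP := H (fun i _ => mul_conjC_ge0 (x i 0)) i isT.
by rewrite mul_conjC_eq0 => /eqP.
Qed.

Lemma ip_gt0 (x : 'cV[C]_n) : x != 0 -> 0 < ip x x.
Proof.
move=> x0; rewrite lt_def ip_ge0 andbT.
by apply: contraNneq x0 => /ip_eq0 ->.
Qed.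

Lemma subspace_mx (P : 'cV[C]_n -> Prop) : P 0 ->
  (forall k x y, P x -> P y -> P (k *: x + y)) ->
  exists U : 'M[C]_n, forall x, P x <-> (x^T <= U)%MS.
Proof.
move=> P0 PL.
suff : forall m, exists U : 'M[C]_n, (forall x, (x^T <= U)%MS -> P x) /\
   ((m <= \rank U)%N \/ (forall x, P x -> (x^T <= U)%MS)).
  case/(_ n.+1) => U [H1 [|H2]]; first by rewrite ltnNge rank_leq_col.
  by exists U => x; split; [apply: H2 | apply: H1].
elim => [|m [U [H1 H2]]].
  exists 0; split; last by left.
  move=> x; rewrite submx0 => /eqP Hx.
  suff -> : x = 0 by [].
  by rewrite -[x]trmxK Hx trmx0.
case: (classic (forall x, P x -> (x^T <= U)%MS)) => H3.
  by exists U; split => //; right.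
case: H2 => H2; last by exists U; split => //; right.
have [x [Px Nx]] : exists x, P x /\ ~ (x^T <= U)%MS.
  apply: NNPP => H4; apply: H3 => x Px; apply: NNPP => Nx.
  by apply: H4; exists x.
exists (U + x^T)%MS; split.
  move=> y /sub_addsmxP [[u1 u2] /= Ey].
  have Hu1 : P ((u1 *m U)^T) by apply: H1; rewrite trmxK submxMl.
  have [k Hk] : exists k, u2 *m x^T = k *: x^T.
    by apply/sub_rVP; rewrite submxMl.
  have -> : y = k *: x + (u1 *m U)^T.
    by rewrite -[y]trmxK Ey Hk linearD /= linearZ /= trmxK addrC.
  exact: PL.
left; apply: leq_ltn_trans H2 _; apply: rank_ltmx.
rewrite ltmxErank addsmxSl /=.
have := mxrank_leqif_sup (addsmxSl U x^T).
move/ltn_leqif => ->.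
apply/negP => /(submx_trans (addsmxSr U x^T)) //.
Qed.


Lemma decomp (P : 'cV[C]_n -> Prop) : P 0 ->
  (forall k x y, P x -> P y -> P (k *: x + y)) ->
  forall v, exists a a', [/\ v = a + a', P a & forall x, P x -> ip a' x = 0].
Proof.
move=> P0 PL v; have [U HU] := subspace_mx P0 PL.
pose r := v^T.
exists (r *m proj_ortho U)^T, (r - r *m proj_ortho U)^T; split.
- by rewrite -linearD /= addrC subrK trmxK.
- by apply/HU; rewrite trmxK proj_ortho_sub.
move=> x /HU /submxP [z Hz].
have := proj_ortho_compl_sub U r; move/orthomx1P => H0.
rewrite /ip dotmxE Hz [X in (X *m _)]trmxK trmx_mul map_mxM mulmxA H0 mul0mx mxE //.
Qed.

End IP.

Section Final.
Variables (C : numClosedFieldType) (n : nat) (V : 'M[C]_(n * n)).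
Local Notation I := 'I_n.
Local Notation ix := (@mxvec_index n n).
Local Notation VF x y := (V *m tens x y = tens x y).

Lemma ipZl k (u v : 'cV[C]_n) : ip (k *: u) v = k * ip u v.
Proof. by rewrite -[k *: u]addr0 ipDl ip0l addr0. Qed.
Lemma ipZr k (u v : 'cV[C]_n) : ip v (k *: u) = k^* * ip v u.
Proof. by rewrite -[k *: u]addr0 ipDr ip0r addr0. Qed.

Lemma nrm1_ip (f : 'cV[C]_n) : ip f f = 1 -> \sum_a (f a 0)^* * f a 0 = 1.
Proof. by rewrite ipE => <-; apply: eq_bigr => a _; rewrite mulrC. Qed.

Lemma tensDl k (x y w : 'cV[C]_n) : tens (k *: x + y) w = k *: tens x w + tens y w.
Proof.
apply/colP => K; case/mxvec_indexP: K => a b.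
rewrite tensE [in RHS]mxE [in RHS]mxE !tensE !mxE.
by rewrite mulrDl mulrA.
Qed.

Lemma tensDr k (x y w : 'cV[C]_n) : tens w (k *: x + y) = k *: tens w x + tens w y.
Proof.
apply/colP => K; case/mxvec_indexP: K => a b.
rewrite tensE [in RHS]mxE [in RHS]mxE !tensE !mxE.
by rewrite mulrDr mulrCA.
Qed.

Lemma tens0l (w : 'cV[C]_n) : tens 0 w = 0.
Proof. by apply/colP => K; case/mxvec_indexP: K => a b; rewrite tensE [in RHS]mxE mxE mul0r. Qed.
Lemma tens0r (w : 'cV[C]_n) : tens w 0 = 0.
Proof. by apply/colP => K; case/mxvec_indexP: K => a b; rewrite tensE [in RHS]mxE mxE mulr0. Qed.

Lemma VF_Dl k (x y w : 'cV[C]_n) : VF x w -> VF y w -> VF (k *: x + y) w.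
Proof. by move=> Hx Hy; rewrite tensDl mulmxDr -scalemxAr Hx Hy. Qed.
Lemma VF_Dr k (x y w : 'cV[C]_n) : VF w x -> VF w y -> VF w (k *: x + y).
Proof. by move=> Hx Hy; rewrite tensDr mulmxDr -scalemxAr Hx Hy. Qed.
Lemma VF_0l (w : 'cV[C]_n) : VF 0 w.
Proof. by rewrite tens0l mulmx0. Qed.
Lemma VF_0r (w : 'cV[C]_n) : VF w 0.
Proof. by rewrite tens0r mulmx0. Qed.
Lemma VF_Zl k (x w : 'cV[C]_n) : VF x w -> VF (k *: x) w.
Proof. by move=> H; rewrite -[k *: x]addr0; apply: VF_Dl => //; apply: VF_0l. Qed.
Lemma VF_Zr k (x w : 'cV[C]_n) : VF w x -> VF w (k *: x).
Proof. by move=> H; rewrite -[k *: x]addr0; apply: VF_Dr => //; apply: VF_0r. Qed.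

Lemma tr_pos (M : 'M[C]_n) : M^t* = M -> M *m M = M -> M != 0 -> 0 < \tr M.
Proof.
move=> Ms MM M0.
have -> : \tr M = \sum_i \sum_k (M k i)^* * M k i.
  rewrite -{1}MM -{1}Ms /mxtrace; apply: eq_bigr => i _; rewrite mxE.
  by apply: eq_bigr => k _; rewrite !mxE.
have Hp i : 0 <= \sum_k (M k i)^* * M k i.
  by apply: sumr_ge0 => k _; rewrite mulrC mul_conjC_ge0.
rewrite lt_def sumr_ge0 ?andbT //; apply/eqP => /psumr_eq0P H.
move/eqP: M0; apply; apply/matrixP => k i; rewrite mxE.
have /psumr_eq0P H2 := H (fun i _ => Hp i) i isT.
have /eqP := H2 (fun k _ => ltac:(rewrite mulrC; exact: mul_conjC_ge0)) k isT.
by rewrite mulrC mul_conjC_eq0 => /eqP.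
Qed.

Lemma eYe (e : 'cV[C]_n) : ip (Ym V *m e) e = \tr (Sm V e).
Proof.
rewrite ipE /mxtrace.
under eq_bigr do rewrite mxE big_distrl.
under [RHS]eq_bigr do rewrite mxE.
transitivity (\sum_j \sum_k \sum_i (e j 0)^* * VcD V i j i k * e k 0).
  apply: eq_bigr => j _; apply: eq_bigr => k _ /=; rewrite mxE big_distrl big_distrl.
  by apply: eq_bigr => i _ /=; ring.
by rewrite sum3_rot.
Qed.

Lemma normalize (u e : 'cV[C]_n) : 0 < ip u e ->
  exists2 c : C, 0 < c & ip (c *: u) (c *: u) = 1 /\ 0 < ip (c *: u) e.
Proof.
move=> Hue.
have u0 : u != 0 by apply: contraTneq Hue => ->; rewrite ip0l ltxx.
have Hp := ip_gt0 u0.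
set p := ip u u in Hp *.
have Hs : 0 < sqrtC p by rewrite sqrtC_gt0.
exists (sqrtC p)^-1; first by rewrite invr_gt0.
split; last by rewrite ipZl mulr_gt0 // invr_gt0.
rewrite ipZl ipZr geC0_conj ?invr_ge0 ?ltW // -/p.
rewrite mulrA -invfM -expr2 sqrtCK mulVf //.
by rewrite gt_eqF.
Qed.

End Final.

Unset Implicit Arguments.

Lemma proj_fix (C : numClosedFieldType) (n : nat) (P : 'cV[C]_n -> Prop) (E : 'M[C]_n) :
  (forall k x y, P x -> P y -> P (k *: x + y)) -> E^t* = E ->
  (forall x, P x -> P (E *m x)) ->
  forall v a a', v = a + a' -> P a -> (forall x, P x -> ip a' x = 0) ->
  E *m v = v -> E *m a = a.
Proof.
move=> PL Es EP v a a' -> Pa Oa' Ev.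
pose d := E *m a - a.
have Pd : P d by rewrite /d addrC -scaleN1r; apply: PL => //; apply: EP.
have Od : forall x, P x -> ip d x = 0.
  move=> x Px.
  have -> : d = a' - E *m a'.
    apply/eqP; rewrite -subr_eq0 /d opprB addrACA -opprD -mulmxDr Ev.
    by rewrite subrr.
  by rewrite ipBl ip_mulC Es !Oa' ?subrr //; apply: EP.
have := ip_eq0 (Od d Pd); rewrite /d => /eqP.
by rewrite subr_eq0 => /eqP.
Qed.

Lemma ipAl (C : numClosedFieldType) (n : nat) (u w v : 'cV[C]_n) :
  ip (u + w) v = ip u v + ip w v.
Proof. by rewrite -[u]scale1r ipDl mul1r scale1r. Qed.

Lemma ipAr (C : numClosedFieldType) (n : nat) (u w v : 'cV[C]_n) :
  ip v (u + w) = ip v u + ip v w.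
Proof. by rewrite -[u]scale1r ipDr rmorph1 mul1r scale1r. Qed.

Lemma mx_idem (C : numClosedFieldType) (n : nat) (M : 'M[C]_n) :
  (forall x : 'cV[C]_n, M *m (M *m x) = M *m x) -> M *m M = M.
Proof.
move=> H; apply/matrixP => i j; have := H (col j 1%:M).
by rewrite !mulmxA -!col_mul !mulmx1 => /colP /(_ i); rewrite !mxE.
Qed.

Theorem corollary3p14 (C : numClosedFieldType) (n : nat) (V : 'M[C]_(n * n))
  (e : 'cV[C]_n) :
  multiplicative_unitary V -> multiplicity_one V ->
  fixed_vector V e -> ip e e = 1 ->
  forall f f' : 'cV[C]_n, pre_subgroup V e f -> pre_subgroup V e f' ->
  exists g g' : 'cV[C]_n,
    [/\ pre_subgroup V e g, pre_subgroup V e g',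
        (forall eta, Hup V f eta /\ Hup V f' eta <-> Hup V g eta),
        (forall eta, Hdown V f eta /\ Hdown V f' eta <-> Hdown V g' eta) &
        (* g = inf(f, f') and g' = sup(f, f') for \prec among pre-subgroups *)
        ([/\ prec V g f, prec V g f' &
             forall h, pre_subgroup V e h -> prec V h f -> prec V h f' -> prec V h g] /\
         [/\ prec V f g', prec V f' g' &
             forall h, pre_subgroup V e h -> prec V f h -> prec V f' h -> prec V g' h])].
Proof.
move=> [Vu pent] _ efix ee f f' [ff fe fff] [ff' fe' fff'].
have nf := nrm1_ip ff; have nf' := nrm1_ip ff'; have ne := nrm1_ip ee.
have FP := VfixP V.
have Ffff := proj1 (FP _ _) fff; have Ffff' := proj1 (FP _ _) fff'.
have Fee := proj1 (FP _ _) (efix e).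
pose PA (x : 'cV[C]_n) := forall w, Hup V f w -> Hup V f' w -> V *m tens x w = tens x w.
have PAL : forall k x y, PA x -> PA y -> PA (k *: x + y).
  by move=> k x y Hx Hy w H1 H2; apply: VF_Dl; [apply: Hx | apply: Hy].
have PA0 : PA 0 by move=> w _ _; apply: VF_0l.
pose eta0 := Ym V *m e.
have Heta : forall y, V *m tens y eta0 = tens y eta0.
  move=> y; apply/FP; apply: (Y_cofix Vu).
  by rewrite /eta0 mulmxA (Y_sq Vu pent) -scalemxAl.
have [a [a' [Ea Pa Oa']]] := decomp PA0 PAL eta0.
have Tpres : forall h, Hup V h h -> PA h -> ip h h = 1 ->
    (forall x, PA x -> PA (Tm V h *m x)) /\ Tm V h *m a = a.
  move=> h hh PAh nh.
  have Fhh := proj1 (FP _ _) hh.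
  have EP : forall x, PA x -> PA (Tm V h *m x).
    move=> x Px w H1 H2; apply/FP; apply: (T_pres pent); apply/FP.
      by apply: Px.
    by apply: PAh.
  split => //.
  apply: (@proj_fix _ _ PA _ PAL (T_selfadj Vu pent Fhh (nrm1_ip nh)) EP _ _ _ Ea Pa Oa').
  apply: (T_of_fix _ (nrm1_ip nh)); apply/FP; exact: Heta.
have PAf : PA f by move=> w H1 H2.
have PAf' : PA f' by move=> w H1 H2.
have [_ Taf] := Tpres f fff PAf ff.
have [_ Taf'] := Tpres f' fff' PAf' ff'.
have Wa1 : Hup V f a by apply/FP; apply: (fix_of_T Vu Taf nf).
have Wa2 : Hup V f' a by apply/FP; apply: (fix_of_T Vu Taf' nf').
have e0 : e != 0.
  by apply/eqP => E0; move: ee; rewrite E0 ip0l => /esym/eqP; rewrite oner_eq0.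
have Se := S_selfadj Vu pent Fee ne.
have SSe : Sm V e *m Sm V e = Sm V e.
  by apply: mx_idem => x; apply: (Sm_idem Vu pent x Fee ne).
have Se0 : Sm V e != 0.
  apply: contraNneq e0 => H0; rewrite -(S_of_fix Fee ne) H0 mul0mx //.
have Hae : 0 < ip a e.
  have := tr_pos Se SSe Se0; rewrite -eYe -/eta0 Ea ipAl.
  by rewrite (Oa' e) ?addr0 // => w _ _; apply: efix.
have [c c0 [gg ge]] := normalize Hae.
pose PB (x : 'cV[C]_n) := forall w, Hdown V f w -> Hdown V f' w -> V *m tens w x = tens w x.
have PBL : forall k x y, PB x -> PB y -> PB (k *: x + y).
  by move=> k x y Hx Hy w H1 H2; apply: VF_Dr; [apply: Hx | apply: Hy].
have PB0 : PB 0 by move=> w _ _; apply: VF_0r.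
have [b [b' [Eb Pb Ob']]] := decomp PB0 PBL e.
have Spres : forall h, Hup V h h -> PB h -> ip h h = 1 -> Sm V h *m b = b.
  move=> h hh PBh nh.
  have Fhh := proj1 (FP _ _) hh.
  have Sh := S_selfadj Vu pent Fhh (nrm1_ip nh).
  have EP : forall x, PB x -> PB (Sm V h *m x).
    move=> x Px w H1 H2; apply/FP; rewrite -Sh; apply: (SC_pres Vu pent); apply/FP.
      by apply: PBh.
    by apply: Px.
  apply: (@proj_fix _ _ PB _ PBL Sh EP _ _ _ Eb Pb Ob').
  by apply: (S_of_fix _ (nrm1_ip nh)); apply/FP; apply: efix.
have PBf : PB f by move=> w H1 H2.
have PBf' : PB f' by move=> w H1 H2.
have Wb1 : Hdown V f b by apply/FP; apply: (fix_of_S Vu (Spres f fff PBf ff) nf).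
have Wb2 : Hdown V f' b by apply/FP; apply: (fix_of_S Vu (Spres f' fff' PBf' ff') nf').
have Hbe : ip b e = ip b b.
  rewrite {1}Eb ipAr (ip_conj b' b) (Ob' b Pb) rmorph0 addr0 //.
have Hbf : ip b f != 0.
  have <- : ip e f = ip b f by rewrite Eb ipAl (Ob' f PBf) addr0.
  by rewrite (ip_conj f e) conjC_eq0 gt_eqF.
have b0 : b != 0 by apply: contraNneq Hbf => ->; rewrite ip0l.
have Hbe' : 0 < ip b e by rewrite Hbe ip_gt0.
have [c' c'0 [gg' ge']] := normalize Hbe'.
have g0 : c *: a != 0 by apply: contraTneq ge => ->; rewrite ip0l ltxx.
have g0' : c' *: b != 0 by apply: contraTneq ge' => ->; rewrite ip0l ltxx.
exists (c *: a), (c' *: b); split.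
- split => //; apply: (@VF_Zl _ _ V c a); apply: (@VF_Zr _ _ V c a a).
  exact: Pa _ Wa1 Wa2.
- split => //; apply: (@VF_Zl _ _ V c' b); apply: (@VF_Zr _ _ V c' b b).
  exact: Pb _ Wb1 Wb2.
- move=> eta; split => [[H1 H2]|H].
    by apply: (@VF_Zl _ _ V c a eta); exact: Pa _ H1 H2.
  split.
    exact: (trans Vu pent (@VF_Zr _ _ V c a f Wa1) H g0).
  exact: (trans Vu pent (@VF_Zr _ _ V c a f' Wa2) H g0).
- move=> eta; split => [[H1 H2]|H].
    by apply: (@VF_Zr _ _ V c' b eta); exact: Pb _ H1 H2.
  split.
    exact: (trans Vu pent H (@VF_Zl _ _ V c' b f Wb1) g0').
  exact: (trans Vu pent H (@VF_Zl _ _ V c' b f' Wb2) g0').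
split; split.
- exact: (@VF_Zr _ _ V c a f Wa1).
- exact: (@VF_Zr _ _ V c a f' Wa2).
- by move=> h _ H1 H2; apply: (@VF_Zl _ _ V c a h); exact: Pa _ H1 H2.
- exact: (@VF_Zl _ _ V c' b f Wb1).
- exact: (@VF_Zl _ _ V c' b f' Wb2).
- by move=> h _ H1 H2; apply: (@VF_Zr _ _ V c' b h); exact: Pb _ H1 H2.
Qed.
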